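(* Let $A\in M_n(\mathbb{C})$ and suppose the Schur map $S_A\colon M_n(\mathbb{C})\to M_n(\mathbb{C})$, $S_A(B)=A\circ B$, is nonzero and multiplicative. Then the following are equivalent: (i) $S_A$ is $*$-preserving, i.e. $S_A(B^* )=S_A(B)^*$ for all $B$; (ii) $\|A\|=n$; (iii) $\frac{1}{n}A$ is an orthogonal projection; (iv) the operator norm of $S_A$ is $1$.
   Context: $A\circ B=(a_{ij}b_{ij})$ is the entrywise (Schur) product; multiplicative means $S_A(BC)=S_A(B)S_A(C)$ for all $B,C$. $\|A\|$ is the operator norm of $A$ on $\mathbb{C}^n$, and the norm of $S_A$ is its operator norm when $M_n(\mathbb{C})$ carries the operator norm on domain and range. *)

(* Defs.v *)
From HB Require Import structures.
From mathcomp Require Import all_boot all_order all_algebra.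
From mathcomp Require Import complex.
From mathcomp Require Import boolp classical_sets reals.
Set Implicit Arguments. Unset Strict Implicit. Unset Printing Implicit Defensive.
Import Order.TTheory GRing.Theory Num.Theory.
Local Open Scope ring_scope.
Local Open Scope classical_set_scope.

Section Defs.
Variable R : realType.
Variable n : nat.

Definition schur (A B : 'M[R[i]]_n) : 'M[R[i]]_n := \matrix_(i, j) (A i j * B i j).

Definition adjmx (B : 'M[R[i]]_n) : 'M[R[i]]_n := map_mx (@conjc R) B^T.

Definition vnorm (x : 'cV[R[i]]_n) : R :=
  Num.sqrt (\sum_k ((complex.Re (x k 0)) ^+ 2 + (complex.Im (x k 0)) ^+ 2)).

Definition opnorm (M : 'M[R[i]]_n) : R :=
  sup [set vnorm (M *m x) | x in [set x : 'cV[R[i]]_n | vnorm x <= 1]].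

Definition schur_opnorm (A : 'M[R[i]]_n) : R :=
  sup [set opnorm (schur A B) | B in [set B : 'M[R[i]]_n | opnorm B <= 1]].

Definition orth_proj (P : 'M[R[i]]_n) : Prop := P *m P = P /\ adjmx P = P.

End Defs.

(* Main.v *)
Require Import Defs.
From HB Require Import structures.
From mathcomp Require Import all_boot all_order all_algebra.
From mathcomp Require Import complex.
From mathcomp Require Import boolp classical_sets reals.
From mathcomp Require Import ring lra.
Import Order.TTheory GRing.Theory Num.Theory.
Local Open Scope ring_scope.
Definition N {R : realType} (z : R[i]) : R := complex.Re z ^+ 2 + complex.Im z ^+ 2.

Lemma NM (R : realType) (x y : R[i]) : N (x * y) = N x * N y.
Proof. case: x => a b; case: y => c d; rewrite /N /=. ring. Qed.

Lemma mulJ (R : realType) (x : R[i]) : x * conjc x = (N x)%:C%C.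
Proof.
case: x => a b; rewrite /N /=. apply/eqP; rewrite eq_complex /=.
apply/andP; split; apply/eqP; ring.
Qed.

Lemma NJ (R : realType) (x : R[i]) : N (conjc x) = N x.
Proof. case: x => a b; rewrite /N /=; ring. Qed.

Lemma N_ge0 (R : realType) (x : R[i]) : 0 <= N x.
Proof. rewrite /N; apply: addr_ge0; apply: sqr_ge0. Qed.

Lemma N0 (R : realType) : N (0 : R[i]) = 0.
Proof. by rewrite /N /= expr0n /= addr0. Qed.

Lemma N1 (R : realType) : N (1 : R[i]) = 1.
Proof. by rewrite /N /= expr0n /= addr0 expr1n. Qed.

Lemma NC (R : realType) (c : R) : N (c%:C)%C = c ^+ 2.
Proof. by rewrite /N /= expr0n /= addr0. Qed.

Lemma N_eq0 (R : realType) (x : R[i]) : N x = 0 -> x = 0.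
Proof.
case: x => a b; rewrite /N /= => h.
have ha : a = 0 by apply/eqP; rewrite -sqrf_eq0; apply/eqP; nra.
have hb : b = 0 by apply/eqP; rewrite -sqrf_eq0; apply/eqP; nra.
by rewrite ha hb.
Qed.

Lemma ReS (R : realType) (n : nat) (f : 'I_n -> R[i]) :
  complex.Re (\sum_j f j) = \sum_j complex.Re (f j).
Proof.
apply: (big_morph (@complex.Re R)) => //.
by move=> [a b] [c d].
Qed.

Lemma ImS (R : realType) (n : nat) (f : 'I_n -> R[i]) :
  complex.Im (\sum_j f j) = \sum_j complex.Im (f j).
Proof.
apply: (big_morph (@complex.Im R)) => //.
by move=> [a b] [c d].
Qed.

Lemma sq_sum (R : realType) (n : nat) (a : 'I_n -> R) :
  (\sum_j a j) ^+ 2 <= n%:R * \sum_j a j ^+ 2.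
Proof.
elim: n a => [|n IH] a; first by rewrite !big_ord0 expr0n /= mul0r.
rewrite !big_ord_recr /=.
set S := \sum_(i < n) a (widen_ord (leqnSn n) i).
set Q := \sum_(i < n) a (widen_ord (leqnSn n) i) ^+ 2.
set x := a ord_max.
have hI : S ^+ 2 <= n%:R * Q by apply: IH.
have hQ : 0 <= Q by apply: sumr_ge0 => i _; apply: sqr_ge0.
rewrite -natr1.
have [n0|npos] := eqVneq n 0%N.
  move: hI; rewrite n0 mul0r => hI.
  have -> : S = 0 by apply/eqP; rewrite -sqrf_eq0 eq_le hI sqr_ge0.
  rewrite add0r add0r mul1r; lra.
have hn : (0:R) < n%:R by rewrite ltr0n lt0n.
have key : 0 <= n%:R * ((n%:R + 1) * (Q + x ^+ 2) - (S + x) ^+ 2).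
  have : 0 <= (S - n%:R * x) ^+ 2 by apply: sqr_ge0.
  nra.
rewrite -subr_ge0; move: key; rewrite pmulr_rge0 //.
Qed.

Lemma NSum (R : realType) (n : nat) (f : 'I_n -> R[i]) :
  N (\sum_j f j) <= n%:R * \sum_j N (f j).
Proof.
rewrite /N ReS ImS big_split /= mulrDr.
by apply: lerD; apply: sq_sum.
Qed.

Definition sn {R : realType} {n : nat} (x : 'cV[R[i]]_n) : R := \sum_k N (x k 0).

Lemma sn_ge0 (R : realType) n (x : 'cV[R[i]]_n) : 0 <= sn x.
Proof. by apply: sumr_ge0 => k _; apply: N_ge0. Qed.

Lemma vnormE (R : realType) n (x : 'cV[R[i]]_n) : vnorm x = Num.sqrt (sn x).
Proof. by []. Qed.

Lemma vnorm_le1 (R : realType) n (x : 'cV[R[i]]_n) : (vnorm x <= 1) = (sn x <= 1).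
Proof. by rewrite vnormE -{1}sqrtr1 ler_sqrt. Qed.

Lemma sup_eqE (R : realType) (S : set R) x : S x -> ubound S x -> sup S = x.
Proof.
move=> Sx ub; apply/le_anti/andP; split.
  by apply: ge_sup => //; exists x.
by apply: ub_le_sup => //; exists x.
Qed.

Lemma opnorm_le (R : realType) n (M : 'M[R[i]]_n) K :
  (forall x, sn x <= 1 -> vnorm (M *m x) <= K) -> opnorm M <= K.
Proof.
move=> h; apply: ge_sup.
  by exists (vnorm (M *m 0)); exists 0 => //=; rewrite vnorm_le1 /sn big1 // => k _; rewrite mxE N0.
by move=> r [x /= hx <-]; apply: h; rewrite -vnorm_le1.
Qed.

Lemma opnorm_ge (R : realType) n (M : 'M[R[i]]_n) K x :
  (forall y, sn y <= 1 -> vnorm (M *m y) <= K) -> sn x <= 1 -> vnorm (M *m x) <= opnorm M.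
Proof.
move=> h hx; apply: ub_le_sup.
  by exists K => r [y /= hy <-]; apply: h; rewrite -vnorm_le1.
by exists x => //=; rewrite vnorm_le1.
Qed.

Lemma opnorm_eq (R : realType) n (M : 'M[R[i]]_n) K x :
  (forall y, sn y <= 1 -> vnorm (M *m y) <= K) -> sn x <= 1 -> vnorm (M *m x) = K ->
  opnorm M = K.
Proof.
move=> h hx hK; apply: sup_eqE.
  by exists x => //=; rewrite vnorm_le1.
by move=> r [y /= hy <-]; apply: h; rewrite -vnorm_le1.
Qed.

Lemma opnorm_ge' (R : realType) n (M : 'M[R[i]]_n) x :
  opnorm M != 0 -> sn x <= 1 -> vnorm (M *m x) <= opnorm M.
Proof.
move=> h hx.
have hs : has_sup [set vnorm (M *m x) | x in [set x : 'cV[R[i]]_n | vnorm x <= 1]].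
  apply/not_notP => hn; move: h; rewrite /opnorm (sup_out hn) eqxx //.
by apply: sup_upper_bound => //; exists x => //=; rewrite vnorm_le1.
Qed.

Lemma delta_mulE (R : realType) n (c : R[i]) (i j : 'I_n) (x : 'cV[R[i]]_n) k :
  ((c *: delta_mx i j) *m x) k 0 = if k == i then c * x j 0 else 0.
Proof.
rewrite mxE (bigD1 j) //= big1 => [|l hl]; last by rewrite !mxE (negbTE hl) andbF mulr0 mul0r.
rewrite !mxE eqxx andbT addr0; case: (k == i); by rewrite ?mulr1 ?mulr0 ?mul0r.
Qed.

Lemma sn_delta (R : realType) n (c : R[i]) (i j : 'I_n) (x : 'cV[R[i]]_n) :
  sn ((c *: delta_mx i j) *m x) = N c * N (x j 0).
Proof.
rewrite /sn (bigD1 i) //= big1 => [|k hk]; last by rewrite delta_mulE (negbTE hk) N0.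
by rewrite delta_mulE eqxx addr0 NM.
Qed.

Lemma N_le_sn (R : realType) n (x : 'cV[R[i]]_n) j : N (x j 0) <= sn x.
Proof.
rewrite /sn (bigD1 j) //= lerDl; apply: sumr_ge0 => k _; exact: N_ge0.
Qed.

Lemma sn_e (R : realType) n (j : 'I_n) : sn (delta_mx j 0 : 'cV[R[i]]_n) = 1.
Proof.
rewrite /sn (bigD1 j) //= big1 => [|k hk]; last by rewrite mxE (negbTE hk) N0.
by rewrite mxE !eqxx addr0 N1.
Qed.

Lemma opnorm_delta (R : realType) n (c : R[i]) (i j : 'I_n) :
  opnorm (c *: delta_mx i j) = Num.sqrt (N c).
Proof.
apply: (@opnorm_eq R n _ _ (delta_mx j 0)).
- move=> y hy; rewrite vnormE sn_delta ler_sqrt ?N_ge0 //.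
  rewrite -{2}(mulr1 (N c)); apply: ler_wpM2l; first exact: N_ge0.
  idtac.
  apply: le_trans hy; exact: N_le_sn.
- by rewrite sn_e.
- by rewrite vnormE sn_delta mxE !eqxx N1 mulr1.
Qed.

Lemma sumN_ge (R : realType) n (f : 'I_n -> R[i]) j : N (f j) <= \sum_k N (f k).
Proof. rewrite (bigD1 j) //= lerDl; apply: sumr_ge0 => k _; exact: N_ge0. Qed.

Lemma schur_delta (R : realType) n (A : 'M[R[i]]_n) i j :
  schur A (delta_mx i j) = A i j *: delta_mx i j.
Proof.
apply/matrixP => k l; rewrite /schur !mxE.
by case: eqP => [->|]; case: eqP => [->|] //= _; rewrite ?mulr0 ?mulr1.
Qed.

Section Main.
Variables (R : realType) (n : nat) (A : 'M[R[i]]_n.+1).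
Hypothesis hrel : forall i j k, A i k = A i j * A j k.
Hypothesis hd : forall i, A i i = 1.

Lemma prod1 i j : A i j * A j i = 1.
Proof. by rewrite -hrel hd. Qed.

Definition Hc := forall i j, N (A i j) = 1.
Definition Herm := forall i j, A i j = conjc (A j i).

Lemma herm_H : Herm <-> Hc.
Proof.
split => h i j.
  have e : (N (A i j))%:C%C = 1 by rewrite -mulJ -h prod1.
  by case: e.
have e : A j i * conjc (A j i) = A j i * A i j by rewrite mulJ h prod1.
have nz : A j i != 0 by apply/eqP => e0; move: (prod1 j i); rewrite e0 mul0r => /eqP; rewrite eq_sym oner_eq0.
by rewrite (mulfI nz e).
Qed.

Lemma i_herm : (forall B : 'M[R[i]]_n.+1, schur A (adjmx B) = adjmx (schur A B)) <-> Herm.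
Proof.
split => h.
  move=> i j; move: (h (delta_mx j i)) => /matrixP /(_ i j).
  rewrite /adjmx /schur !mxE !eqxx /= mulr1.
  have e1 : ((1 : R) -i* 0)%C = 1 by apply/eqP; rewrite eq_complex /= oppr0 !eqxx.
  by rewrite e1 mulr1.
move=> B; apply/matrixP => k l; rewrite /adjmx /schur !mxE.
by rewrite rmorphM /= -h.
Qed.

Lemma AA : A *m A = (n.+1)%:R *: A.
Proof.
apply/matrixP => i k; rewrite !mxE.
under eq_bigr do rewrite -hrel.
by rewrite sumr_const card_ord mulr_natl.
Qed.

Lemma iii_herm : orth_proj ((n.+1)%:R^-1 *: A) <-> Herm.
Proof.
have nz : ((n.+1)%:R : R[i]) != 0 by rewrite pnatr_eq0.
have nzi : ((n.+1)%:R : R[i])^-1 != 0 by rewrite invr_eq0.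
have cc : conjc (((n.+1)%:R : R[i])^-1) = (n.+1)%:R^-1 by rewrite conjc_inv conjc_nat.
have idem : (n.+1)%:R^-1 *: A *m ((n.+1)%:R^-1 *: A) = (n.+1)%:R^-1 *: A.
  by rewrite -scalemxAl -scalemxAr AA !scalerA mulrAC mulVf // mul1r.
have adjZ : adjmx ((n.+1)%:R^-1 *: A) = (n.+1)%:R^-1 *: adjmx A.
  by apply/matrixP => i j; rewrite /adjmx !mxE rmorphM /= cc.
rewrite /orth_proj adjZ; split.
  move=> [_ /(scalerI nzi) e] i j.
  by move/matrixP: e => /(_ i j); rewrite /adjmx !mxE => <-.
move=> h; split => //; congr (_ *: _); apply/matrixP => i j.
by rewrite /adjmx !mxE -h.
Qed.


Lemma Ax_col (x : 'cV[R[i]]_n.+1) i :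
  (A *m x) i 0 = A i 0 * \sum_j A 0 j * x j 0.
Proof.
rewrite mxE mulr_sumr; apply: eq_bigr => j _.
by rewrite (hrel i 0 j) mulrA.
Qed.

Lemma sn_Ax (x : 'cV[R[i]]_n.+1) :
  sn (A *m x) = (\sum_i N (A i 0)) * N (\sum_j A 0 j * x j 0).
Proof.
rewrite /sn mulr_suml; apply: eq_bigr => i _; by rewrite Ax_col NM.
Qed.

Definition T := \sum_i \sum_j N (A i j).

Lemma T_split : T = (\sum_i N (A i 0)) * (\sum_j N (A 0 j)).
Proof.
rewrite /T mulr_suml; apply: eq_bigr => i _; rewrite mulr_sumr.
by apply: eq_bigr => j _; rewrite (hrel i 0 j) NM.
Qed.

Definition sig := \sum_j N (A 0 j).

Lemma sig_ge1 : 1 <= sig.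
Proof. rewrite /sig -(N1 R) -(hd 0); exact: (@sumN_ge R _ (fun j => A 0 j)). Qed.

Definition x0 : 'cV[R[i]]_n.+1 :=
  \col_j (conjc (A 0 j) * ((Num.sqrt sig)^-1)%:C%C).

Lemma sn_x0 : sn x0 = 1.
Proof.
have sp : 0 < sig by apply: lt_le_trans sig_ge1.
rewrite /sn; under eq_bigr do rewrite mxE NM NJ NC.
rewrite -mulr_suml exprVn sqr_sqrtr ?ltW // mulfV //.
by rewrite gt_eqF.
Qed.

Lemma vnorm_Ax0 : vnorm (A *m x0) = Num.sqrt T.
Proof.
have sp : 0 < sig by apply: lt_le_trans sig_ge1.
rewrite vnormE sn_Ax T_split; congr (Num.sqrt (_ * _)).
have -> : \sum_j A 0 j * x0 j 0 = (sig * (Num.sqrt sig)^-1)%:C%C.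
  rewrite /sig rmorphM /= rmorph_sum mulr_suml; apply: eq_bigr => j _.
  by rewrite mxE mulrA mulJ.
rewrite NC exprMn exprVn sqr_sqrtr ?ltW // expr2 -mulrA mulfV ?mulr1 //.
by rewrite gt_eqF.
Qed.

Lemma amgm : T <= (n.+1)%:R ^+ 2 -> Hc.
Proof.
move=> hT.
set t := fun i j => N (A i j).
have tt : forall i j, t i j * t j i = 1 by move=> i j; rewrite /t -NM prod1 N1.
have tpos : forall i j, 0 <= t i j by move=> i j; apply: N_ge0.
pose g i j := t i j + t j i - 2.
have gpos : forall i j, 0 <= g i j.
  move=> i j; rewrite /g.
  have tp : 0 < t i j.
    rewrite lt_def tpos andbT; apply/eqP => e; move: (tt i j); rewrite e mul0r.
    by move/eqP; rewrite eq_sym oner_eq0.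
  have e : t i j * (t i j + t j i - 2) = (t i j - 1) ^+ 2.
    have -> : t i j * (t i j + t j i - 2) = t i j ^+ 2 + t i j * t j i - 2 * t i j by ring.
    rewrite tt; ring.
  by rewrite -(pmulr_rge0 _ tp) e sqr_ge0.
have sg : \sum_i \sum_j g i j = 2 * T - 2 * (n.+1)%:R ^+ 2.
  have h1 : \sum_i \sum_j g i j =
      \sum_i \sum_j t i j + \sum_i \sum_j t j i - \sum_(i < n.+1) \sum_(j < n.+1) (2 : R).
    rewrite /g -big_split -sumrB /=; apply: eq_bigr => i _.
    by rewrite -big_split -sumrB.
  have e2 : \sum_(i < n.+1) \sum_(j < n.+1) (2 : R) = 2 * (n.+1)%:R ^+ 2.
    rewrite sumr_const card_ord sumr_const card_ord.
    by rewrite -mulrnA -natrX mulr_natr mulnn.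
  rewrite h1 e2 [\sum_i \sum_j t j i](exchange_big).
  have -> : T = \sum_i \sum_j t i j by [].
  move: (\sum_i \sum_j t i j) => S.
  ring.
have s0 : \sum_i \sum_j g i j = 0.
  apply/le_anti/andP; split; last by apply: sumr_ge0 => i _; apply: sumr_ge0.
  by rewrite sg subr_le0; apply: ler_wpM2l.
move=> i j.
have gij : g i j = 0.
  have h : \sum_j g i j = 0.
    move: s0; move/psumr_eq0P => h; apply: h => // k _.
    by apply: sumr_ge0 => l _.
  by move: h; move/psumr_eq0P => h; apply: h.
have e : (t i j - 1) ^+ 2 = 0.
  have -> : (t i j - 1) ^+ 2 = t i j * (t i j + t j i - 2) - t i j * t j i + 1 by ring.
  by move: gij; rewrite /g => ->; rewrite tt mulr0; ring.
by move: e => /eqP; rewrite sqrf_eq0 subr_eq0 => /eqP.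
Qed.
Lemma ii_H : opnorm A = (n.+1)%:R <-> Hc.
Proof.
have TH : Hc -> T = (n.+1)%:R ^+ 2.
  move=> h; rewrite /T; under eq_bigr do under eq_bigr do rewrite h.
  by rewrite !sumr_const !card_ord -mulrnA -natrX mulnn.
split => h.
  apply: amgm.
  have : vnorm (A *m x0) <= opnorm A by apply: opnorm_ge'; rewrite ?h ?pnatr_eq0 // sn_x0.
  rewrite vnorm_Ax0 h -[X in _ <= X]ger0_norm ?ler0n // -sqrtr_sqr ler_sqrt //.
  exact: sqr_ge0.
apply: (@opnorm_eq R n.+1 A _ x0); last by rewrite vnorm_Ax0 TH ?sqrtr_sqr ?ger0_norm.
  move=> y hy; rewrite vnormE sn_Ax.
  have -> : \sum_i N (A i 0) = (n.+1)%:R.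
    by under eq_bigr do rewrite h; rewrite sumr_const card_ord.
  rewrite -[X in _ <= X]ger0_norm ?ler0n // -sqrtr_sqr ler_sqrt ?sqr_ge0 //.
  rewrite expr2; apply: ler_wpM2l => //.
  apply: (le_trans (NSum _ _ _)).
  rewrite -[X in _ <= X]mulr1; apply: ler_wpM2l => //.
  by under eq_bigr do rewrite NM h mul1r.
by rewrite sn_x0.
Qed.

Definition phi (x : 'cV[R[i]]_n.+1) : 'cV[R[i]]_n.+1 := \col_j (conjc (A j 0) * x j 0).
Definition psi (x : 'cV[R[i]]_n.+1) : 'cV[R[i]]_n.+1 := \col_j (A j 0 * x j 0).

Lemma uu (h : Hc) j : conjc (A j 0) * A j 0 = 1.
Proof. by rewrite mulrC mulJ h. Qed.

Lemma phi_psi (h : Hc) y : phi (psi y) = y.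
Proof.
by apply/matrixP => j k; rewrite !mxE (ord1 k) mulrA uu // mul1r.
Qed.

Lemma sn_phi (h : Hc) x : sn (phi x) = sn x.
Proof. by rewrite /sn; apply: eq_bigr => j _; rewrite mxE NM NJ h mul1r. Qed.

Lemma sn_schur (h : Hc) (B : 'M[R[i]]_n.+1) x :
  sn (schur A B *m x) = sn (B *m phi x).
Proof.
have he : Herm by apply/herm_H.
rewrite /sn; apply: eq_bigr => i _.
have -> : (schur A B *m x) i 0 = A i 0 * (B *m phi x) i 0.
  rewrite !mxE mulr_sumr; apply: eq_bigr => j _.
  rewrite !mxE (hrel i 0 j) (he 0 j); ring.
by rewrite NM h mul1r.
Qed.

Lemma opnorm_schur (h : Hc) (B : 'M[R[i]]_n.+1) : opnorm (schur A B) = opnorm B.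
Proof.
rewrite /opnorm; congr sup; apply/seteqP; split => r [x /= hx <-].
  exists (phi x) => /=; first by rewrite vnorm_le1 sn_phi // -vnorm_le1.
  by rewrite !vnormE sn_schur.
exists (psi x) => /=.
  by rewrite vnorm_le1 -(sn_phi h) phi_psi // -vnorm_le1.
by rewrite !vnormE sn_schur // phi_psi.
Qed.

Lemma iv_H : schur_opnorm A = 1 <-> Hc.
Proof.
split => h.
  have hs : has_sup [set opnorm (schur A B) | B in [set B : 'M[R[i]]_n.+1 | opnorm B <= 1]].
    apply/not_notP => hn; move: h; rewrite /schur_opnorm (sup_out hn) => /eqP.
    by rewrite eq_sym oner_eq0.
  have le1 : forall i j, N (A i j) <= 1.
    move=> i j.
    have : opnorm (schur A (delta_mx i j)) <= 1.
      rewrite -h; apply: sup_upper_bound => //; exists (delta_mx i j) => //=.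
      by rewrite -(scale1r (delta_mx i j)) opnorm_delta N1 sqrtr1.
    rewrite schur_delta opnorm_delta => hh; by rewrite -ler_sqrt ?ler01 // sqrtr1.
  move=> i j.
  have p : N (A i j) * N (A j i) = 1 by rewrite -NM prod1 N1.
  apply/le_anti; rewrite le1 /=; rewrite -p -[X in _ <= X]mulr1.
  by apply: ler_wpM2l; [exact: N_ge0 | exact: le1].
have o1 : opnorm (1%:M : 'M[R[i]]_n.+1) = 1.
  apply: (@opnorm_eq R n.+1 _ _ (delta_mx 0 0)).
  - by move=> y hy; rewrite mul1mx vnorm_le1.
  - by rewrite sn_e.
  - by rewrite mul1mx vnormE sn_e sqrtr1.
apply: sup_eqE.
  exists 1%:M; first by rewrite /= o1.
  by rewrite opnorm_schur // o1.
move=> r [B hB <-]; by rewrite opnorm_schur.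
Qed.
End Main.

Theorem proposition2p5 (R : realType) (n : nat) (A : 'M[R[i]]_n)
  (Hnz : (fun B : 'M[R[i]]_n => schur A B) <> (fun _ => 0))
  (Hmul : forall B C : 'M[R[i]]_n, schur A (B *m C) = schur A B *m schur A C) :
  [/\ ((forall B : 'M[R[i]]_n, schur A (adjmx B) = adjmx (schur A B)) <-> opnorm A = n%:R),
      (opnorm A = n%:R <-> orth_proj ((n%:R)^-1 *: A)) &
      (orth_proj ((n%:R)^-1 *: A) <-> schur_opnorm A = 1)].
Proof.
case: n A Hnz Hmul => [|m] A Hnz Hmul.
  exfalso; apply: Hnz; apply: funext => B; apply/matrixP => i; case: i => [] //.
have hrel : forall i j k, A i k = A i j * A j k.
  move=> i j k; move/matrixP: (Hmul (delta_mx i j) (delta_mx j k)) => /(_ i k).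
  rewrite mul_delta_mx !schur_delta -scalemxAl -scalemxAr mul_delta_mx !mxE !eqxx /=.
  by rewrite !mulr1.
have hd : forall i, A i i = 1.
  move=> i; have e : A i i = A i i * A i i by apply: hrel.
  case: (eqVneq (A i i) 0) => [z|nz]; last by apply: (mulfI nz); rewrite mulr1 -e.
  exfalso; apply: Hnz; apply: funext => B; apply/matrixP => k l; rewrite /schur !mxE.
  by rewrite (hrel k i l) (hrel k i i) z !mulr0 !mul0r.
have h1 := @i_herm R m A.
have h2 := @herm_H R m A hrel hd.
have h3 := @ii_H R m A hrel hd.
have h4 := @iii_herm R m A hrel.
have h5 := @iv_H R m A hrel hd.
split; tauto.
Qed.
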